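(* Let $\varphi=\bigwedge_{j\in G}B_j\omega_j$ be a DBI normal formula, where $\varnothing\neq G\subseteq\mathcal{A}$. (1) If $i\notin\mathsf{ta}(\varphi)$, i.e., $i\notin G$, then for every formula $\sigma$ and every pointed Kripke model $(\mathcal{M},v)$: $\mathcal{M},v\vDash B_i\sigma$ iff $\mathcal{M}\odot\mathcal{U}_\varphi,(v,0)\vDash B_i\sigma$. (2) If $i\in\mathsf{ta}(\varphi)$ but $\omega_i=\bigwedge_{j\in H}B_j\pi_j$ has no propositional component, then for every purely propositional formula $\chi$ and every pointed Kripke model $(\mathcal{M},v)$: $\mathcal{M},v\vDash B_i\chi$ iff $\mathcal{M}\odot\mathcal{U}_\varphi,(v,0)\vDash B_i\chi$.
   Context: Agents $\mathcal{A}=\{1,\dots,n\}$, $n>1$; language $\mathcal{L}$: $\varphi ::= p \mid \neg\varphi \mid (\varphi\wedge\varphi)\mid B_i\varphi$, $\top$ the usual tautology. Kripke model $\mathcal{M}=\langle S,R,V\rangle$ (nonempty $S$, $R_i\subseteq S\times S$, $V:\mathit{Prop}\to 2^S$), standard truth. Action model $\mathcal{U}=\langle E,Q,\mathsf{pre}\rangle$ (nonempty $E$, $Q_i\subseteq E\times E$, $\mathsf{pre}:E\to\mathcal{L}$). Pointed update of $(\mathcal{M},w)$ with $(\mathcal{U},\alpha)$, defined iff $\mathcal{M},w\vDash\mathsf{pre}(\alpha)$: with $T=\{(x,\beta)\in S\times E\mid\mathcal{M},x\vDash\mathsf{pre}(\beta)\}$, $\mathcal{M}\odot\mathcal{U}=\langle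 S^{\mathcal U},R^{\mathcal U},V^{\mathcal U}\rangle$ where $S^{\mathcal U}$ is the smallest subset of $T$ containing $(w,\alpha)$ closed under: $(x,\beta)\in S^{\mathcal U}$, $(u,\gamma)\in T$, $xR_iu$, $\beta Q_i\gamma$ imply $(u,\gamma)\in S^{\mathcal U}$; $R^{\mathcal U}_i$ relates $(x,\beta),(u,\gamma)\in S^{\mathcal U}$ iff $xR_iu$ and $\beta Q_i\gamma$; $V^{\mathcal U}(p)=\{(x,\beta)\in S^{\mathcal U}\mid x\in V(p)\}$. Target agents: $\mathsf{ta}(p)=\varnothing$, $\mathsf{ta}(\neg\phi)=\mathsf{ta}(\phi)$, $\mathsf{ta}(\phi\wedge\psi)=\mathsf{ta}(\phi)\cup\mathsf{ta}(\psi)$, $\mathsf{ta}(B_i\phi)=\{i\}$. DBI formulas: $\varphi ::= B_i\xi \mid B_i(\xi\wedge\varphi)\mid(\varphi\wedge\varphi)\mid B_i\varphi$, $\xi$ purely propositional. DBI normal: $B_i\xi$ always; $B_i\varphi$, $B_i(\xi\wedge\varphi)$ iff $\varphi$ DBI normal and $i\notin\mathsf{ta}(\varphi)$; $\varphi\wedge\psi$ iff both DBI normal and $\mathsf{ta}(\varphi)\cap\mathsf{ta}(\psi)=\varnothing$. Action model $\mathcal{U}_\varphi=\langle E^\varphi,Q^\varphi,\mathsf{pre}^\varphi\rangle$ for DBI normal $\varphi$, recursively; always $E^\varphi=\{0,-1\}\sqcup D^\varphi$, $\varnothing\ne D^\varphi\subseteq\{1,2,\dots\}$, $\mathsf{pre}^\varphi(0)=\mathsf{pre}^\varphi(-1)=\top$;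 $\underline{Q}_j:=Q_j\cap((E\setminus\{0\})\times(E\setminus\{0\}))$. (1) $\varphi=B_i\xi$: $D=\{m\}$, $\mathsf{pre}(m)=\xi$, $Q_j=\{(0,-1),(m,-1),(-1,-1)\}$ ($j\ne i$), $Q_i=\{(0,m),(m,m),(-1,-1)\}$. (2) $\varphi=B_i\psi$: fresh $m\ge1$, $m\notin D^\psi$; $D^\varphi=D^\psi\sqcup\{m\}$; $\mathsf{pre}^\varphi$ extends $\mathsf{pre}^\psi$ with $\mathsf{pre}^\varphi(m)=\top$; $Q^\varphi_j=\underline{Q}^\psi_j\cup\{(0,-1)\}\cup\{(m,k)\mid(0,k)\in Q^\psi_j\}$ ($j\ne i$); $Q^\varphi_i=\underline{Q}^\psi_i\cup\{(0,m),(m,m)\}$. (3) $\varphi=B_i(\xi\wedge\psi)$: as (2) but $\mathsf{pre}^\varphi(m)=\xi$. (4) $\varphi=\psi\wedge\theta$: with $D^\psi\cap D^\theta=\varnothing$, $D^\varphi=D^\psi\sqcup D^\theta$, $\mathsf{pre}^\varphi=\mathsf{pre}^\psi\cup\mathsf{pre}^\theta$, $Q^\varphi_j=\underline{Q}^\psi_j\cup\underline{Q}^\theta_j\cup\{(0,k)\mid(0,k)\in Q^\psi_j\cup Q^\theta_j, k\in D^\psi\sqcup D^\theta\}\cup\{(0,-1)\mid\text{no such }k\text{ exists}\}$. *)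

(* Defs.v *)
From Stdlib Require Import ZArith List.
Import ListNotations.
Open Scope Z_scope.

Definition agent (n : nat) : Type := {i : nat | (1 <= i <= n)%nat}.

Inductive form (n : nat) : Type :=
| Var  : nat -> form n
| Neg  : form n -> form n
| Conj : form n -> form n -> form n
| Bel  : agent n -> form n -> form n.
Arguments Var {n} _.
Arguments Neg {n} _.
Arguments Conj {n} _ _.
Arguments Bel {n} _ _.

Definition top {n} : form n := Neg (Conj (Var 0%nat) (Neg (Var 0%nat))).

Record kmodel (n : nat) := KM {
  kst  : Type;
  krel : agent n -> kst -> kst -> Prop;
  kval : nat -> kst -> Prop }.
Arguments kst {n} _.
Arguments krel {n} _ _ _ _.
Arguments kval {n} _ _ _.

Fixpoint sat {n} (M : kmodel n) (w : kst M) (f : form n) : Prop :=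
  match f with
  | Var p => kval M p w
  | Neg g => ~ sat M w g
  | Conj g h => sat M w g /\ sat M w h
  | Bel i g => forall u, krel M i w u -> sat M u g
  end.

Record amodel (n : nat) := AM {
  aev  : Type;
  arel : agent n -> aev -> aev -> Prop;
  apre : aev -> form n }.
Arguments aev {n} _.
Arguments arel {n} _ _ _ _.
Arguments apre {n} _ _.

Inductive gen {n} (M : kmodel n) (U : amodel n) (w : kst M) (a : aev U)
  : kst M -> aev U -> Prop :=
| gen_root : gen M U w a w a
| gen_step : forall x b u c j,
    gen M U w a x b -> sat M u (apre U c) -> krel M j x u -> arel U j b c ->
    gen M U w a u c.

(* Pointed update, defined when M,w |= pre(a) (hypothesis hd). *)
Definition update {n} (M : kmodel n) (U : amodel n) (w : kst M) (a : aev U)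
  (hd : sat M w (apre U a)) : kmodel n :=
  {| kst := {p : kst M * aev U | gen M U w a (fst p) (snd p)};
     krel := fun j p q =>
       krel M j (fst (proj1_sig p)) (fst (proj1_sig q)) /\
       arel U j (snd (proj1_sig p)) (snd (proj1_sig q));
     kval := fun p s => kval M p (fst (proj1_sig s)) |}.

Definition update_root {n} (M : kmodel n) (U : amodel n) (w : kst M) (a : aev U)
  (hd : sat M w (apre U a)) : kst (update M U w a hd) :=
  exist _ (w, a) (gen_root M U w a).

Fixpoint ta {n} (f : form n) : list (agent n) :=
  match f with
  | Var _ => []
  | Neg g => ta g
  | Conj g h => ta g ++ ta h
  | Bel i _ => [i]
  end.

Fixpoint is_prop {n} (f : form n) : Prop :=
  match f with
  | Var _ => True
  | Neg g => is_prop g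
  | Conj g h => is_prop g /\ is_prop h
  | Bel _ _ => False
  end.

Inductive dbi_normal {n} : form n -> Prop :=
| dn_Bprop : forall i xi, is_prop xi -> dbi_normal (Bel i xi)
| dn_B : forall i g, dbi_normal g -> ~ In i (ta g) -> dbi_normal (Bel i g)
| dn_Bconj : forall i xi g, is_prop xi -> dbi_normal g -> ~ In i (ta g) ->
    dbi_normal (Bel i (Conj xi g))
| dn_conj : forall g h, dbi_normal g -> dbi_normal h ->
    (forall j, In j (ta g) -> ~ In j (ta h)) -> dbi_normal (Conj g h).

Fixpoint conjuncts {n} (f : form n) : list (form n) :=
  match f with
  | Conj g h => conjuncts g ++ conjuncts h
  | _ => [f]
  end.

(* Construction of U_phi.  Events are integers; E = {0,-1} ⊔ D.
   Uphi phi D Q pre  holds iff (D,Q,pre) is a (any admissible choice of fresh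
   indices m) result of the recursive construction (1)-(4). *)
Definition inE (D : Z -> Prop) (e : Z) : Prop := e = 0 \/ e = -1 \/ D e.

Inductive Uphi {n} : form n -> (Z -> Prop) -> (agent n -> Z -> Z -> Prop) ->
                     (Z -> form n) -> Prop :=
| U_Bprop : forall i xi m D Q pre,
    is_prop xi -> 1 <= m ->
    (forall e, D e <-> e = m) ->
    pre 0 = top -> pre (-1) = top -> pre m = xi ->
    (forall j e f, j <> i ->
       (Q j e f <-> (e = 0 /\ f = -1) \/ (e = m /\ f = -1) \/ (e = -1 /\ f = -1))) ->
    (forall e f,
       (Q i e f <-> (e = 0 /\ f = m) \/ (e = m /\ f = m) \/ (e = -1 /\ f = -1))) ->
    Uphi (Bel i xi) D Q pre
| U_B : forall i g m Dg Qg preg D Q pre,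
    Uphi g Dg Qg preg -> 1 <= m -> ~ Dg m ->
    (forall e, D e <-> Dg e \/ e = m) ->
    (forall e, inE Dg e -> pre e = preg e) ->
    pre 0 = top -> pre (-1) = top -> pre m = top ->
    (forall j e f, j <> i ->
       (Q j e f <-> (Qg j e f /\ e <> 0 /\ f <> 0) \/ (e = 0 /\ f = -1)
                    \/ (e = m /\ Qg j 0 f))) ->
    (forall e f,
       (Q i e f <-> (Qg i e f /\ e <> 0 /\ f <> 0) \/ (e = 0 /\ f = m)
                    \/ (e = m /\ f = m))) ->
    Uphi (Bel i g) D Q pre
| U_Bconj : forall i xi g m Dg Qg preg D Q pre,
    is_prop xi ->
    Uphi g Dg Qg preg -> 1 <= m -> ~ Dg m ->
    (forall e, D e <-> Dg e \/ e = m) ->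
    (forall e, inE Dg e -> pre e = preg e) ->
    pre 0 = top -> pre (-1) = top -> pre m = xi ->
    (forall j e f, j <> i ->
       (Q j e f <-> (Qg j e f /\ e <> 0 /\ f <> 0) \/ (e = 0 /\ f = -1)
                    \/ (e = m /\ Qg j 0 f))) ->
    (forall e f,
       (Q i e f <-> (Qg i e f /\ e <> 0 /\ f <> 0) \/ (e = 0 /\ f = m)
                    \/ (e = m /\ f = m))) ->
    Uphi (Bel i (Conj xi g)) D Q pre
| U_conj : forall g h Dg Qg preg Dh Qh preh D Q pre,
    Uphi g Dg Qg preg -> Uphi h Dh Qh preh ->
    (forall e, Dg e -> ~ Dh e) ->
    (forall e, D e <-> Dg e \/ Dh e) ->
    (forall e, inE Dg e -> pre e = preg e) ->
    (forall e, inE Dh e -> pre e = preh e) ->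
    pre 0 = top -> pre (-1) = top ->
    (forall j e f,
       (Q j e f <->
          (Qg j e f /\ e <> 0 /\ f <> 0) \/ (Qh j e f /\ e <> 0 /\ f <> 0)
          \/ (e = 0 /\ (Qg j 0 f \/ Qh j 0 f) /\ (Dg f \/ Dh f))
          \/ (e = 0 /\ f = -1 /\
              ~ (exists k, (Qg j 0 k \/ Qh j 0 k) /\ (Dg k \/ Dh k))))) ->
    Uphi (Conj g h) D Q pre.

Definition Umodel {n} (D : Z -> Prop) (Q : agent n -> Z -> Z -> Prop)
  (pre : Z -> form n) : amodel n :=
  {| aev := {e : Z | inE D e};
     arel := fun j e f => Q j (proj1_sig e) (proj1_sig f);
     apre := fun e => pre (proj1_sig e) |}.

Definition ev0 {n} (D : Z -> Prop) (Q : agent n -> Z -> Z -> Prop)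
  (pre : Z -> form n) : aev (Umodel D Q pre) :=
  exist _ 0 (or_introl eq_refl).

Lemma Uphi_pre0 {n} (f : form n) D Q pre : Uphi f D Q pre -> pre 0 = top.
Proof. intros H; destruct H; assumption. Qed.

Lemma Uphi_defined {n} (f : form n) D Q pre (HU : Uphi f D Q pre)
  (M : kmodel n) (v : kst M) : sat M v (apre (Umodel D Q pre) (ev0 D Q pre)).
Proof. simpl. rewrite (Uphi_pre0 f D Q pre HU). simpl. tauto. Qed.

(* Main.v *)
Require Import Defs.
From Stdlib Require Import ZArith List Lia Classical.
Import ListNotations.

Lemma top_true {n} (M : kmodel n) u : sat M u top.
Proof. simpl. tauto. Qed.

Lemma Uphi_prem1 {n} (f : form n) D Q pre : Uphi f D Q pre -> pre (-1)%Z = top.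
Proof. intros H; destruct H; assumption. Qed.

Lemma Dpos {n} (f : form n) D Q pre : Uphi f D Q pre -> forall e, D e -> (1 <= e)%Z.
Proof.
  induction 1; intros e He.
  - apply H1 in He; lia.
  - apply H2 in He; destruct He as [He|He]; [auto|lia].
  - apply H3 in He; destruct He as [He|He]; [auto|lia].
  - apply H2 in He; destruct He as [He|He]; auto.
Qed.

Lemma Qm1 {n} (f : form n) D Q pre : Uphi f D Q pre ->
  forall j e, Q j (-1)%Z e <-> e = (-1)%Z.
Proof.
  induction 1; intros j e.
  - destruct (classic (j = i)) as [->|Hj].
    + rewrite H6; lia.
    + rewrite (H5 j _ _ Hj); lia.
  - destruct (classic (j = i)) as [->|Hj].
    + rewrite H8, IHUphi; lia.
    + rewrite (H7 j _ _ Hj), IHUphi; lia.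
  - destruct (classic (j = i)) as [->|Hj].
    + rewrite H9, IHUphi; lia.
    + rewrite (H8 j _ _ Hj), IHUphi; lia.
  - rewrite H7, IHUphi1, IHUphi2. lia.
Qed.

Lemma Q0_notin {n} (f : form n) D Q pre : Uphi f D Q pre ->
  forall i, ~ In i (ta f) -> forall e, Q i 0%Z e <-> e = (-1)%Z.
Proof.
  induction 1; intros i0 Hi e; simpl in Hi.
  - assert (i0 <> i) by (intro; subst; tauto). rewrite (H5 i0 _ _ H7); lia.
  - assert (i0 <> i) by (intro; subst; tauto). rewrite (H7 i0 _ _ H9); lia.
  - assert (i0 <> i) by (intro; subst; tauto). rewrite (H8 i0 _ _ H10); lia.
  - rewrite in_app_iff in Hi.
    assert (Hg : ~ In i0 (ta g)) by tauto.
    assert (Hh : ~ In i0 (ta h)) by tauto.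
    pose proof (Dpos _ _ _ _ H) as Pg. pose proof (Dpos _ _ _ _ H0) as Ph.
    rewrite H7, (IHUphi1 _ Hg), (IHUphi2 _ Hh). split.
    + intros [A|[A|[A|A]]]; try lia;
      destruct A as [_ [[A|A] [B|B]]]; subst;
        first [apply Pg in B | apply Ph in B]; lia.
    + intros ->. right; right; right. split; [reflexivity|split;[reflexivity|]].
      intros [k [[A|A] [B|B]]];
        first [apply (IHUphi1 _ Hg) in A | apply (IHUphi2 _ Hh) in A]; subst;
        first [apply Pg in B | apply Ph in B]; lia.
Qed.

Lemma conj_nonempty {n} (f : form n) : exists c, In c (conjuncts f).
Proof.
  induction f; simpl; try (eexists; left; reflexivity).
  destruct IHf1 as [c Hc]. exists c. apply in_app_iff; auto.
Qed.

Lemma prop_nonbel {n} (f : form n) : is_prop f ->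
  exists c, In c (conjuncts f) /\ forall j p, c <> Bel j p.
Proof.
  induction f; simpl; intros Hp.
  - eexists; split; [left; reflexivity| discriminate].
  - eexists; split; [left; reflexivity| discriminate].
  - destruct Hp as [H1 _]. destruct (IHf1 H1) as [c [Hc Hb]].
    exists c; split; auto. apply in_app_iff; auto.
  - contradiction.
Qed.

Lemma find_gamma {n} (f : form n) D Q pre : Uphi f D Q pre ->
  forall i omega, In (Bel i omega) (conjuncts f) ->
  (forall c, In c (conjuncts omega) -> exists j pi, c = Bel j pi) ->
  exists g, Q i 0%Z g /\ D g /\ pre g = top.
Proof.
  induction 1; intros i0 om Hin Hom; simpl in Hin.
  - destruct Hin as [E|[]]. injection E; intros; subst.
    destruct (prop_nonbel _ H) as [c [Hc Hb]].
    destruct (Hom c Hc) as [j [p ->]]. exfalso; eapply Hb; reflexivity.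
  - destruct Hin as [E|[]]. injection E; intros; subst.
    exists m. split; [apply H8; auto|]. split; [apply H2; auto|auto].
  - destruct Hin as [E|[]]. injection E; intros; subst.
    destruct (prop_nonbel _ H) as [c [Hc Hb]].
    destruct (Hom c (in_or_app _ _ _ (or_introl Hc))) as [j [p ->]].
    exfalso; eapply Hb; reflexivity.
  - apply in_app_iff in Hin. destruct Hin as [Hin|Hin].
    + destruct (IHUphi1 _ _ Hin Hom) as [g0 [A [B C]]].
      exists g0. split; [apply H7; right; right; left; auto|].
      split; [apply H2; auto|]. rewrite H3; auto. right; right; auto.
    + destruct (IHUphi2 _ _ Hin Hom) as [g0 [A [B C]]].
      exists g0. split; [apply H7; right; right; left; auto|].
      split; [apply H2; auto|]. rewrite H4; auto. right; right; auto.
Qed.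

Section Upd.
Context {n : nat} (phi : form n) (D : Z -> Prop) (Q : agent n -> Z -> Z -> Prop)
  (pre : Z -> form n) (HU : Uphi phi D Q pre) (M : kmodel n) (v : kst M)
  (hd : sat M v (apre (Umodel D Q pre) (ev0 D Q pre))).

Definition em1 : aev (Umodel D Q pre) :=
  exist _ (-1)%Z (or_intror (or_introl eq_refl)).

Lemma inv_m1 : forall sg (s : kst (update M (Umodel D Q pre) v (ev0 D Q pre) hd)),
  proj1_sig (snd (proj1_sig s)) = (-1)%Z ->
  (sat _ s sg <-> sat M (fst (proj1_sig s)) sg).
Proof.
  induction sg; intros s Hs; simpl.
  - tauto.
  - rewrite IHsg; tauto.
  - rewrite IHsg1, IHsg2; tauto.
  - destruct s as [[x e] Hg]; simpl in *. split.
    + intros H u Hu.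
      assert (Hg' : gen M (Umodel D Q pre) v (ev0 D Q pre) u em1).
      { eapply gen_step with (j := a); [exact Hg| | exact Hu|].
        - simpl. rewrite (Uphi_prem1 _ _ _ _ HU). apply top_true.
        - simpl. rewrite Hs. apply (Qm1 _ _ _ _ HU). reflexivity. }
      specialize (H (exist _ (u, em1) Hg')). simpl in H.
      rewrite IHsg in H by reflexivity.
      apply H. split; [exact Hu|]. simpl. rewrite Hs.
      apply (Qm1 _ _ _ _ HU). reflexivity.
    + intros H s' [H1 H2]. simpl in H2. rewrite Hs in H2.
      apply (Qm1 _ _ _ _ HU) in H2.
      rewrite IHsg by exact H2. apply H; exact H1.
Qed.

Lemma inv_prop : forall sg, is_prop sg ->
  forall (s : kst (update M (Umodel D Q pre) v (ev0 D Q pre) hd)),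
  (sat _ s sg <-> sat M (fst (proj1_sig s)) sg).
Proof.
  induction sg; intros Hp s; simpl in *.
  - tauto.
  - rewrite IHsg; tauto.
  - destruct Hp. rewrite IHsg1, IHsg2; tauto.
  - contradiction.
Qed.
End Upd.

Theorem corollary1 (n : nat) (Hn : (1 < n)%nat) (phi : form n)
  (Hphi : dbi_normal phi)
  (D : Z -> Prop) (Q : agent n -> Z -> Z -> Prop) (pre : Z -> form n)
  (HU : Uphi phi D Q pre) (i : agent n) :
  (~ In i (ta phi) ->
   forall (sigma : form n) (M : kmodel n) (v : kst M),
     sat M v (Bel i sigma) <->
     sat (update M (Umodel D Q pre) v (ev0 D Q pre) (Uphi_defined phi D Q pre HU M v))
         (update_root M (Umodel D Q pre) v (ev0 D Q pre) (Uphi_defined phi D Q pre HU M v))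
         (Bel i sigma))
  /\
  (In i (ta phi) ->
   forall omega : form n, In (Bel i omega) (conjuncts phi) ->
   (forall c, In c (conjuncts omega) -> exists j pi, c = Bel j pi) ->
   forall (chi : form n), is_prop chi ->
   forall (M : kmodel n) (v : kst M),
     sat M v (Bel i chi) <->
     sat (update M (Umodel D Q pre) v (ev0 D Q pre) (Uphi_defined phi D Q pre HU M v))
         (update_root M (Umodel D Q pre) v (ev0 D Q pre) (Uphi_defined phi D Q pre HU M v))
         (Bel i chi)).
Proof.
  split.
  - intros Hi sigma M v. generalize (Uphi_defined phi D Q pre HU M v). intro hd.
    simpl. split.
    + intros H s [H1 H2]. simpl in H1, H2.
      apply (Q0_notin _ _ _ _ HU _ Hi) in H2.
      rewrite (inv_m1 phi D Q pre HU M v hd) by exact H2. apply H; exact H1.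
    + intros H u Hu.
      assert (Hg' : gen M (Umodel D Q pre) v (ev0 D Q pre) u (em1 D Q pre)).
      { eapply gen_step with (j := i); [apply gen_root| | exact Hu|].
        - simpl. rewrite (Uphi_prem1 _ _ _ _ HU). apply top_true.
        - simpl. apply (Q0_notin _ _ _ _ HU _ Hi). reflexivity. }
      specialize (H (exist _ (u, em1 D Q pre) Hg')).
      rewrite (inv_m1 phi D Q pre HU M v hd) in H by reflexivity.
      apply H. split; [exact Hu|]. simpl. apply (Q0_notin _ _ _ _ HU _ Hi). reflexivity.
  - intros _ omega Hin Hom chi Hchi M v.
    generalize (Uphi_defined phi D Q pre HU M v). intro hd.
    simpl. split.
    + intros H s [H1 H2]. simpl in H1.
      rewrite (inv_prop D Q pre M v hd _ Hchi). apply H; exact H1.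
    + intros H u Hu.
      destruct (find_gamma _ _ _ _ HU _ _ Hin Hom) as [g [Hq [Hd Hp]]].
      set (eg := exist (inE D) g (or_intror (or_intror Hd)) : aev (Umodel D Q pre)).
      assert (Hg' : gen M (Umodel D Q pre) v (ev0 D Q pre) u eg).
      { eapply gen_step with (j := i); [apply gen_root| | exact Hu|].
        - simpl. rewrite Hp. apply top_true.
        - simpl. exact Hq. }
      specialize (H (exist _ (u, eg) Hg')).
      rewrite (inv_prop D Q pre M v hd _ Hchi) in H.
      apply H. split; [exact Hu|]. simpl. exact Hq.
Qed.
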